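(* Let $n\ge 2$ and $\rho>0$, and let each channel gain $|h_i|^2$, $i=1,\dots,n$, be exponentially distributed with mean $1$ (Rayleigh fading). Then the best-case zero-outage capacity $\overline{R^{0}}(\rho)=\log_2(1+\rho\,\phi(0))$ satisfies $$\overline{R^{0}}(\rho)\le\log_2\bigl(1+\rho\, n\log(n)\bigr).$$
   Context: Here $G(x)=-\log(1-x)$ is the quantile of the $\mathrm{Exp}(1)$ distribution (natural logarithm). Define $H_0(x)=(n-1)G((n-1)x)+G(1-x)=-(n-1)\log(1-(n-1)x)-\log(x)$, $c_n(0)=\min\{c\in[0,\tfrac1n]: \int_c^{1/n}H_0(t)\,dt\ge(\tfrac1n-c)H_0(c)\}$, and $\phi(0)=H_0(c_n(0))$ if $c_n(0)>0$, $\phi(0)=n$ if $c_n(0)=0$. The quantity $\log_2(1+\rho\phi(0))$ is the best-case (over joint distributions with these marginals) zero-outage capacity without CSI at the transmitter. *)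

(* Defs.v *)
From HB Require Import structures.
From mathcomp Require Import all_boot all_order all_algebra.
From mathcomp Require Import all_classical all_reals all_analysis.
Set Implicit Arguments. Unset Strict Implicit. Unset Printing Implicit Defensive.
Import Order.TTheory GRing.Theory Num.Theory.
Import numFieldNormedType.Exports.
Local Open Scope classical_set_scope.
Local Open Scope ring_scope.

(* Quantile of Exp(1): G(x) = -log(1-x) (natural log). *)
Definition Gq {R : realType} (x : R) : R := - ln (1 - x).

Definition H0r {R : realType} (n : nat) (x : R) : R :=
  (n.-1)%:R * Gq ((n.-1)%:R * x) + Gq (1 - x).

(* H_0 valued in extended reals: H_0(0) = -log 0 = +oo (mathematical value);
   for x > 0 it is the real value above. *)
Definition H0 {R : realType} (n : nat) (x : R) : \bar R :=
  if x == 0 then +oo%E else (H0r n x)%:E.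

Definition cn0_cond {R : realType} (n : nat) (c : R) : Prop :=
  (((n%:R^-1 - c)%R)%:E * H0 n c <=
     \int[@lebesgue_measure R]_(t in `[c, (n%:R^-1)%R]) H0 n t)%E.

Definition is_cn0 {R : realType} (n : nat) (c : R) : Prop :=
  [/\ 0 <= c, c <= n%:R^-1, cn0_cond n c &
      forall c' : R, 0 <= c' -> c' <= n%:R^-1 -> cn0_cond n c' -> c <= c'].

Definition phi0 {R : realType} (n : nat) (c : R) : R :=
  if 0 < c then H0r n c else n%:R.

Definition log2 {R : realType} (x : R) : R := ln x / ln 2.

(* Main.v *)
Require Import Defs.
From HB Require Import structures.
From mathcomp Require Import all_boot all_order all_algebra.
From mathcomp Require Import all_classical all_reals all_analysis.
From mathcomp Require Import ring lra.
From mathcomp Require Import measurable_realfun.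
Import Order.TTheory GRing.Theory Num.Theory.
Import numFieldNormedType.Exports.
Local Open Scope classical_set_scope.
Local Open Scope ring_scope.

Lemma ln_le_sub1 {R : realType} (y : R) : 0 < y -> ln y <= y - 1.
Proof.
move=> y0; have := @le_ln1Dx R (y - 1).
rewrite addrCA subrr addr0; apply; lra.
Qed.

Lemma ln_conc {R : realType} {a b s : R} : 0 < a -> 0 < b -> 0 <= s -> s <= 1 ->
  (1 - s) * ln a + s * ln b <= ln ((1 - s) * a + s * b).
Proof.
move=> a0 b0 s0 s1.
set M := (1 - s) * a + s * b.
have M0 : 0 < M.
  rewrite /M; nra.
have h1 := @ln_le_sub1 _ _ (divr_gt0 a0 M0).
have h2 := @ln_le_sub1 _ _ (divr_gt0 b0 M0).
rewrite ln_div ?posrE // in h1; rewrite ln_div ?posrE // in h2.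
have E : (1 - s) * (a / M) + s * (b / M) = 1.
  rewrite !mulrA -mulrDl -/M mulfV // gt_eqF //.
have k1 := ler_wpM2l (_ : 0 <= 1 - s) h1.
have k2 := ler_wpM2l s0 h2.
have : 0 <= 1 - s by lra.
move=> hs; move: (k1 hs) => {}k1.
nra.
Qed.

Lemma natn_pred {R : realType} {n : nat} : (1 <= n)%N -> (n%:R : R) = (n.-1)%:R + 1.
Proof. by move=> n1; rewrite natr1 prednK. Qed.

Lemma H0rE {R : realType} (n : nat) (x : R) :
  H0r n x = - ((n.-1)%:R * ln (1 - (n.-1)%:R * x)) - ln x.
Proof. by rewrite /H0r /Gq subKr mulrN. Qed.

Lemma H0r_ge0 {R : realType} (n : nat) (x : R) : (1 <= n)%N ->
  0 < x -> n%:R * x <= 1 -> 0 <= H0r n x.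
Proof.
move=> n1 x0; rewrite (natn_pred n1) H0rE; set k : R := (n.-1)%:R => hx.
have k0 : 0 <= k by rewrite /k ler0n.
have l1 : ln (1 - k * x) <= 0 by apply: ln_le0; nra.
have l2 : ln x <= 0 by apply: ln_le0; nra.
nra.
Qed.

Lemma H0r_bound {R : realType} (n : nat) (x : R) : (1 <= n)%N ->
  0 < x -> n%:R * x <= 1 -> H0r n x <= (n.-1)%:R * ln (n%:R) - ln x.
Proof.
move=> n1 x0; rewrite H0rE (natn_pred n1); set k : R := (n.-1)%:R => hx.
have k0 : 0 <= k by rewrite /k ler0n.
have h : (k + 1)^-1 <= 1 - k * x.
  rewrite -div1r ler_pdivrMr; last lra.
  nra.
rewrite -ler_ln ?posrE in h; last 2 first.
- by rewrite invr_gt0; lra.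
- nra.
rewrite lnV ?posrE in h; last lra.
nra.
Qed.

Lemma H0r_e {R : realType} (n : nat) : (1 <= n)%N ->
  H0r n (n%:R^-1 : R) = n%:R * ln (n%:R : R).
Proof.
move=> n1; rewrite H0rE (natn_pred n1); set k : R := (n.-1)%:R.
have k0 : 0 <= k by rewrite /k ler0n.
have -> : 1 - k * (k + 1)^-1 = (k + 1)^-1.
  by field; lra.
rewrite lnV ?posrE; last lra.
ring.
Qed.

Lemma H0r_conv {R : realType} (n : nat) (c e s : R) :
  0 < c -> 0 < e -> 0 < 1 - (n.-1)%:R * c -> 0 < 1 - (n.-1)%:R * e ->
  0 <= s -> s <= 1 ->
  H0r n ((1 - s) * c + s * e) <= (1 - s) * H0r n c + s * H0r n e.
Proof.
rewrite !H0rE; set k : R := (n.-1)%:R => c0 e0 hc he s0 s1.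
have k0 : 0 <= k by rewrite /k ler0n.
have h1 := ln_conc hc he s0 s1.
have h2 := ln_conc c0 e0 s0 s1.
have -> : 1 - k * ((1 - s) * c + s * e) = (1 - s) * (1 - k * c) + s * (1 - k * e)
  by ring.
have h3 := ler_wpM2l k0 h1.
nra.
Qed.

Lemma H0r_meas {R : realType} (n : nat) : measurable_fun setT (H0r n : R -> R).
Proof.
rewrite /H0r /Gq; under eq_fun do rewrite subKr.
apply: measurable_funD.
  apply: measurable_funM => //.
  apply: measurableT_comp => //.
  apply: measurableT_comp; first exact: measurable_ln.
  apply: measurable_funB => //.
by apply: measurableT_comp.
Qed.

Lemma dF {R : realType} (K x : R) : 0 < x ->
  is_derive x 1 ((K \*: id) + id - id * (@ln R) : R -> R) (K - ln x).
Proof.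
move=> x0; have dl := is_derive1_ln x0.
apply: is_derive_eq.
rewrite /= /GRing.scale /= !mulr1 mulfV ?gt_eqF //.
ring.
Qed.

Lemma G_cont {R : realType} (K x : R) : 0 < x ->
  {for x, continuous ((K \*: id) + id - id * (@ln R) : R -> R)}.
Proof.
move=> x0; apply: differentiable_continuous; apply/derivable1_diffP.
by have h := dF K _ x0; exact: ex_derive.
Qed.

Lemma ftc_ln {R : realType} (K a b : R) : 0 < a -> a < b ->
  (\int[@lebesgue_measure R]_(x in `[a, b]) (K - ln x)%:E =
   (K * b + b - b * ln b)%:E - (K * a + a - a * ln a)%:E)%E.
Proof.
move=> a0 ab.
set G := ((K \*: id) + id - id * (@ln R) : R -> R).
have GE y : G y = K * y + y - y * ln y.
  by rewrite /G /= /GRing.scale /=.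
rewrite -!GE.
apply: continuous_FTC2 => //.
- apply: continuous_in_subspaceT => x; rewrite inE/= in_itv/= => /andP[ax _].
  apply: (continuousB (f:=cst K) (g:=@ln R)); first exact: cst_continuous.
  by apply: continuous_ln; exact: lt_le_trans a0 ax.
- split.
  + move=> x; rewrite in_itv /= => /andP[ax _].
    by have h := dF K _ (lt_trans a0 ax); exact: ex_derive.
  + exact/cvg_at_right_filter/G_cont.
  + exact/cvg_at_left_filter/G_cont/(lt_trans a0 ab).
- move=> x; rewrite in_itv /= => /andP[ax _].
  rewrite derive1E.
  by have h := dF K _ (lt_trans a0 ax); exact: derive_val.
Qed.

Lemma H0_eq {R : realType} (n : nat) (t : R) : 0 < t -> H0 n t = (H0r n t)%:E.
Proof. by move=> t0; rewrite /H0 gt_eqF. Qed.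

Lemma H0_meas {R : realType} (n : nat) (D : set R) : measurable D ->
  (forall t, D t -> 0 < t) -> measurable_fun D (H0 n).
Proof.
move=> mD Dp.
apply: (@eq_measurable_fun _ _ _ _ D (EFin \o H0r n)).
  by move=> t; rewrite inE => Dt; rewrite /= H0_eq // Dp.
apply/measurable_EFinP.
exact: measurable_funS (H0r_meas n).
Qed.

Lemma int_seg_bound {R : realType} (n : nat) (a : R) : (1 <= n)%N ->
  0 < a -> a < n%:R^-1 ->
  (\int[@lebesgue_measure R]_(t in `[a, (n%:R^-1)%R]) H0 n t <=
    (((n.-1)%:R * ln (n%:R : R) * n%:R^-1 + n%:R^-1 - n%:R^-1 * ln (n%:R^-1 : R))%R)%:E)%E.
Proof.
set e : R := n%:R^-1; set K : R := (n.-1)%:R * ln (n%:R : R).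
move=> n1 a0 ae.
have n0 : (0 : R) < n%:R by rewrite ltr0n.
have K0 : 0 <= K by rewrite /K mulr_ge0 ?ler0n // ln_ge0 // ler1n.
have pos t : t \in `[a, e] -> 0 < t.
  by rewrite in_itv /= => /andP[ha _]; exact: lt_le_trans a0 ha.
under eq_integral => t ht do rewrite (H0_eq n t (pos t (set_mem ht))).
apply: (@le_trans _ _ (\int[@lebesgue_measure R]_(t in `[a, e]) (K - ln t)%:E)%E).
  apply: ge0_le_integral => //.
  - move=> t ht; rewrite lee_fin; apply: H0r_ge0 => //; first exact: pos.
    move: ht; rewrite /= in_itv /= => /andP[_ te].
    by apply: (le_trans (ler_wpM2l (ltW n0) te)); rewrite /e mulfV // gt_eqF.
  - apply/measurable_EFinP; exact: measurable_funS (H0r_meas n).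
  - apply/measurable_EFinP; apply: measurable_funB => //.
    by apply: (measurable_funS (E := setT)).
  - move=> t ht; rewrite lee_fin; apply: H0r_bound => //; first exact: pos.
    move: ht; rewrite /= in_itv /= => /andP[_ te].
    by apply: (le_trans (ler_wpM2l (ltW n0) te)); rewrite /e mulfV // gt_eqF.
rewrite ftc_ln // -EFinB lee_fin.
have : 0 <= K * a + a - a * ln a.
  have : ln a <= 0.
    apply: ln_le0; apply: (le_trans (ltW ae)).
    by rewrite invf_le1 // ler1n.
  nra.
lra.
Qed.

Lemma int_fin {R : realType} (n : nat) : (1 <= n)%N ->
  (\int[@lebesgue_measure R]_(t in `[0%R, (n%:R^-1)%R]) H0 n t < +oo)%E.
Proof.
move=> n1.
set e : R := n%:R^-1.
have n0 : (0 : R) < n%:R by rewrite ltr0n.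
have e0 : 0 < e by rewrite /e invr_gt0.
set B : R := (n.-1)%:R * ln (n%:R : R) * n%:R^-1 + n%:R^-1 - n%:R^-1 * ln (n%:R^-1 : R).
pose F (k : nat) := [set` `[e / (k.+2)%:R, e]].
have k2 (k : nat) : (0 : R) < (k.+2)%:R by rewrite ltr0n.
have Fk0 k : 0 < e / (k.+2)%:R by rewrite divr_gt0.
have Fke k : e / (k.+2)%:R < e.
  by rewrite ltr_pdivrMr // ltr_pMr // ltr1n.
rewrite -integral_itv_obnd_cbnd; last first.
  by apply: H0_meas => // t; rewrite /= in_itv /= => /andP[].
have UF : [set` `]0, e]] = \bigcup_k F k.
  apply/seteqP; split => t /=.
    rewrite in_itv /= => /andP[t0 te].
    exists (Num.truncn (e / t)) => //=.
    rewrite /F /= in_itv /= te andbT.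
    have h := truncnS_gt (e / t).
    rewrite ltr_pdivrMr // in h.
    rewrite ler_pdivrMr // -natr1.
    nra.


  move=> [k _]; rewrite /F /= !in_itv /= => /andP[ht ->].
  by rewrite (lt_le_trans (Fk0 k) ht).
have nd : nondecreasing_seq F.
  move=> i j ij; rewrite subsetEset => t; rewrite /F /= !in_itv /= => /andP[ht ->].
  rewrite andbT; apply: le_trans ht.
  rewrite ler_pdivrMr // mulrAC ler_pdivlMr // ler_pM2l // ler_nat.
  by rewrite ltnS ltnS.
have mF k : measurable (F k) by exact: measurable_itv.
have mf k : measurable_fun (F k) (H0 n).
  apply: H0_meas => // t; rewrite /F /= in_itv /= => /andP[ht _].
  exact: lt_le_trans (Fk0 k) ht.
have f0 k t : F k t -> (0 <= H0 n t)%E.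
  rewrite /F /= in_itv /= => /andP[ht te].
  have t0 := lt_le_trans (Fk0 k) ht.
  rewrite H0_eq // lee_fin; apply: H0r_ge0 => //.
  by apply: (le_trans (ler_wpM2l (ltW n0) te)); rewrite /e mulfV // gt_eqF.
have cv := ge0_nondecreasing_set_cvg_integral nd mF mf f0 (mu := @lebesgue_measure R).
rewrite UF -(cvg_lim _ cv) //.
apply: (@le_lt_trans _ _ B%:E); last exact: ltry.
apply: lime_le; first by apply/cvg_ex; eexists; exact: cv.
apply: nearW => k.
exact: int_seg_bound.
Qed.

Lemma kx_lt1 {R : realType} (n : nat) (x : R) : (1 <= n)%N -> 0 < x ->
  n%:R * x <= 1 -> 0 < 1 - (n.-1)%:R * x.
Proof. move=> n1 x0; rewrite (natn_pred n1); nra. Qed.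

Lemma chord {R : realType} (n : nat) (c e t : R) : (1 <= n)%N ->
  0 < c -> c < e -> n%:R * e <= 1 -> c <= t -> t <= e ->
  H0r n t <= H0r n c - (t - c) / (e - c) * (H0r n c - H0r n e).
Proof.
move=> n1 c0 ce ne ct te.
have n0 : (0 : R) < n%:R by rewrite ltr0n.
have ec0 : 0 < e - c by lra.
set s := (t - c) / (e - c).
have s0 : 0 <= s by rewrite /s; apply: divr_ge0; lra.
have s1 : s <= 1.
  rewrite /s ler_pdivrMr //; lra.
have tE : t = (1 - s) * c + s * e.
  rewrite /s; field; lra.
have hc : 0 < 1 - (n.-1)%:R * c.
  apply: kx_lt1 => //; apply: le_trans ne; rewrite ler_pM2l //; lra.
have he : 0 < 1 - (n.-1)%:R * e.
  apply: kx_lt1 => //; lra.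
have := H0r_conv n c e s c0 (lt_trans c0 ce) hc he s0 s1.
rewrite -tE.
lra.
Qed.

Lemma c_bound {R : realType} (n : nat) (c : R) : (1 <= n)%N ->
  0 < c -> c <= n%:R^-1 -> cn0_cond n c -> H0r n c <= H0r n (n%:R^-1).
Proof.
move=> n1 c0 ce0 cond.
set e : R := n%:R^-1 in ce0 cond *.
have n0 : (0 : R) < n%:R by rewrite ltr0n.
have ne : n%:R * e <= 1 by rewrite /e mulfV // gt_eqF.
set A := H0r n c; set B := H0r n e.
case: (leP A B) => // BA; exfalso.
have ce : c < e.
  move: ce0; rewrite le_eqVlt => /orP[/eqP ceq|//].
  by move: BA; rewrite /A /B ceq ltxx.
set m := (c + e) / 2.
have cm : c < m by rewrite /m; lra.
have me : m < e by rewrite /m; lra.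
have pos t : t \in `[c, e] -> 0 < t.
  by rewrite in_itv /= => /andP[ha _]; exact: lt_le_trans c0 ha.
move: cond; rewrite /cn0_cond -/e H0_eq // -EFinM.
under eq_integral => t ht do rewrite (H0_eq n t (pos t (set_mem ht))).
rewrite (@itv_bndbnd_setU _ _ (BLeft c) (BRight m) (BRight e)); last 2 first.
  by rewrite bnd_simp ltW.
  by rewrite bnd_simp ltW.
rewrite ge0_integral_setU //; last 3 first.
- apply/measurable_EFinP; exact: measurable_funS (H0r_meas n).
- move=> t [] ht; rewrite lee_fin; apply: H0r_ge0 => //.
  + move: ht; rewrite /= in_itv /= => /andP[ha _]; exact: lt_le_trans c0 ha.
  + apply: le_trans ne; rewrite ler_pM2l //.
    by move: ht; rewrite /= in_itv /= => /andP[_ hb]; lra.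
  + move: ht; rewrite /= in_itv /= => /andP[ha _]; exact: lt_trans c0 (lt_trans cm ha).
  + apply: le_trans ne; rewrite ler_pM2l //.
    by move: ht; rewrite /= in_itv /= => /andP[_ hb].
- rewrite disj_set2E; apply/eqP; apply/seteqP; split => // t /=.
  rewrite !in_itv /= => -[/andP[_ h1] /andP[h2 _]]; lra.
set mu := @lebesgue_measure R.
have I1 : (\int[mu]_(t in `[c, m]) (H0r n t)%:E <= (A * (m - c))%:E)%E.
  apply: (@le_trans _ _ (\int[mu]_(t in `[c, m]) (cst A%:E) t)%E).
    apply: ge0_le_integral => //.
    - move=> t; rewrite /= in_itv /= => /andP[ha hb]; rewrite lee_fin.
      apply: H0r_ge0 => //; first exact: lt_le_trans c0 ha.
      apply: le_trans ne; rewrite ler_pM2l //; lra.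
    - apply/measurable_EFinP; exact: measurable_funS (H0r_meas n).
    - move=> t; rewrite /= in_itv /= => /andP[ha hb]; rewrite lee_fin.
      have := chord n c e t n1 c0 ce ne ha (le_trans hb (ltW me)).
      have : 0 <= (t - c) / (e - c) * (A - B).
        apply: mulr_ge0; last lra.
        apply: divr_ge0; lra.
      rewrite -/A -/B; lra.
  by rewrite integral_cst //= lebesgue_measure_itv /= lte_fin cm -EFinD -EFinM.
have I2 : (\int[mu]_(t in `]m, e]) (H0r n t)%:E <= ((A + B) / 2 * (e - m))%:E)%E.
  apply: (@le_trans _ _ (\int[mu]_(t in `]m, e]) (cst ((A + B) / 2)%:E) t)%E).
    apply: ge0_le_integral => //.
    - move=> t; rewrite /= in_itv /= => /andP[ha hb]; rewrite lee_fin.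
      apply: H0r_ge0 => //; first exact: lt_trans c0 (lt_trans cm ha).
      apply: le_trans ne; rewrite ler_pM2l //; lra.
    - apply/measurable_EFinP; exact: measurable_funS (H0r_meas n).
    - move=> t; rewrite /= in_itv /= => /andP[ha hb]; rewrite lee_fin.
      have := chord n c e t n1 c0 ce ne (ltW (lt_trans cm ha)) hb.
      have : 2^-1 <= (t - c) / (e - c).
        rewrite ler_pdivlMr; last lra.
        rewrite /m in ha; lra.
      move=> h; have := ler_wpM2r (_ : 0 <= A - B) h.
      rewrite -/A -/B; lra.
  by rewrite integral_cst //= lebesgue_measure_itv /= lte_fin me -EFinD -EFinM.
move=> H; have := le_trans H (leeD I1 I2).
rewrite -EFinD lee_fin -/A.
have h : 0 < (A - B) * (e - c) by apply: mulr_gt0; lra.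
rewrite /m; nra.
Qed.

Theorem corollary2 (R : realType) (n : nat) (rho c : R) :
  (2 <= n)%N -> 0 < rho -> is_cn0 n c ->
  log2 (1 + rho * phi0 n c) <= log2 (1 + rho * (n%:R * ln (n%:R : R))).
Proof.
move=> n2 rho0 [c0 ce cond _].
have n1 : (1 <= n)%N by apply: ltnW.
have n0 : (0 : R) < n%:R by rewrite ltr0n.
have lnn : 0 <= ln (n%:R : R) by rewrite ln_ge0 // ler1n.
have [p0 p1] : 0 <= phi0 n c /\ phi0 n c <= n%:R * ln (n%:R : R).
  rewrite /phi0; case: ifPn => cpos.
    split.
      apply: H0r_ge0 => //.
      apply: (le_trans (ler_wpM2l (ltW n0) ce)).
      by rewrite mulfV // gt_eqF.
    by rewrite -H0r_e //; exact: c_bound.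
  exfalso.
  have c00 : c = 0 by apply/eqP; rewrite eq_le c0 andbT leNgt.
  subst c.
  move: cond; rewrite /cn0_cond /H0 eqxx subr0 gt0_muley ?lte_fin ?invr_gt0 //.
  move=> h; have := lt_le_trans (int_fin (R:=R) n n1) h.
  by rewrite ltxx.
rewrite /log2; apply: ler_wpM2r.
  by rewrite invr_ge0 ln_ge0 // ler1n.
rewrite ler_ln ?posrE; last 2 first.
- by apply: ltr_pwDl => //; apply: mulr_ge0 => //; exact: ltW.
- by apply: ltr_pwDl => //; apply: mulr_ge0 => //; [exact: ltW | exact: mulr_ge0].
by rewrite lerD2l ler_wpM2l // ltW.
Qed.
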